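(* For the iterates of SONATA with step-size $\alpha\in(0,1]$ under Assumptions (A), (B), (C), (W), for every $\nu\ge0$: $$\|\delta^\nu\|^2\le4L_{\max}^2\|x_\perp^\nu\|^2+2\|y_\perp^\nu\|^2.$$
   Context: Problem (P): minimize $U=F+G$ over $\mathcal K$, $F=\frac1m\sum_{i=1}^mf_i$. (A): $\mathcal K\subseteq\mathbb R^d$ nonempty closed convex; $f_i$ twice differentiable convex on open $\mathcal O\supseteq\mathcal K$; $\mu I\preceq\nabla^2F\preceq LI$ on $\mathcal K$ ($\mu>0$); $G$ convex on $\mathcal K$. $\nabla^2f_i\preceq L_iI$ on $\mathcal K$, $L_{\max}=\max_iL_i$. (B): connected undirected graph on $\{1,\dots,m\}$, edges $\mathcal E$. (W): $w_{ii}>0$; for $i\ne j$, $w_{ij}>0$ iff $(i,j)\in\mathcal E$, else 0; $W$ doubly stochastic. (C): $\tilde f_i:\mathcal O\times\mathcal O\to\mathbb R$ $C^2$, $\nabla\tilde f_i(x;x)=\nabla f_i(x)$, $\nabla\tilde f_i(\cdot;x)$ Lipschitz, $\tilde f_i(\cdot;x)$ strongly convex on $\mathcal K$ for $x\in\mathcal K$. SONATA: $x_i^0\in\mathcal K$, $y_i^0=\nabla f_i(x_i^0)$; $\hat x_i^\nu=\arg\min_{x_i\in\mathcal K}\tilde f_i(x_i;x_i^\nu)+(y_i^\nu-\nabla f_i(x_i^\nu))^\top(x_i-x_i^\nu)+G(x_i)$; $x_i^{\nu+1/2}=x_i^\nu+\alpha(\hat x_i^\nu-x_i^\nu)$; $x_i^{\nu+1}=\sum_jw_{ij}x_j^{\nu+1/2}$;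 $y_i^{\nu+1}=\sum_jw_{ij}(y_j^\nu+\nabla f_j(x_j^{\nu+1})-\nabla f_j(x_j^\nu))$. $\delta^\nu$ stacks $\delta_i^\nu=\nabla F(x_i^\nu)-y_i^\nu$; $x_\perp^\nu=x^\nu-\mathbf1_m\otimes\frac1m\sum_ix_i^\nu$, $y_\perp^\nu=y^\nu-\mathbf1_m\otimes\frac1m\sum_iy_i^\nu$, with $x^\nu,y^\nu$ stacking the local vectors. *)

(* Defs.v *)
(* Vectors of R^d are row vectors 'rV[R]_d (a normed module in the library);
   the Euclidean inner product and squared Euclidean norm are written out
   explicitly below (the library's norm on matrices is the sup norm). *)
From HB Require Import structures.
From mathcomp Require Import all_boot all_order all_algebra.
From mathcomp Require Import all_classical all_reals all_analysis.
Set Implicit Arguments. Unset Strict Implicit. Unset Printing Implicit Defensive.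
Import Order.TTheory GRing.Theory Num.Theory.
Import numFieldNormedType.Exports.
Local Open Scope classical_set_scope.
Local Open Scope ring_scope.

Section Defs.
Context {R : realType} {d : nat}.
Notation V := 'rV[R]_d.

Definition dotv (u v : V) : R := \sum_(k < d) u ord0 k * v ord0 k.
Definition sqn (u : V) : R := dotv u u.

Definition convex_in (S : set V) : Prop :=
  forall x y (t : R), S x -> S y -> 0 <= t <= 1 -> S ((1 - t) *: x + t *: y).

Definition convex_fun_on (S : set V) (f : V -> R) : Prop :=
  forall x y (t : R), S x -> S y -> 0 <= t <= 1 -> S ((1 - t) *: x + t *: y) ->
    f ((1 - t) *: x + t *: y) <= (1 - t) * f x + t * f y.

Definition strongly_convex_on (S : set V) (f : V -> R) : Prop :=
  exists tau : R, 0 < tau /\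
  forall x y (t : R), S x -> S y -> 0 <= t <= 1 ->
    f ((1 - t) *: x + t *: y) <=
      (1 - t) * f x + t * f y - tau / 2 * (t * (1 - t)) * sqn (x - y).

Definition is_gradient_on (S : set V) (f : V -> R) (g : V -> V) : Prop :=
  forall x, S x -> differentiable f x /\ forall h, 'd f x h = dotv (g x) h.

Definition euclid_lipschitz_on (S : set V) (g : V -> V) : Prop :=
  exists c : R, forall u v, S u -> S v -> sqn (g u - g v) <= c ^+ 2 * sqn (u - v).

Definition C2_on {U : normedModType R} (S : set U) (f : U -> R) : Prop :=
  forall u v : U,
    (forall p, S p -> derivable f p u) /\
    (forall p, S p -> derivable (fun q => 'D_u f q) p v) /\
    (forall p, S p -> {for p, continuous (fun q => 'D_v (fun r => 'D_u f r) q)}).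

Definition avgv (m : nat) (z : 'I_m -> V) : V := (m%:R)^-1 *: \sum_(i < m) z i.
Definition sqn_perp (m : nat) (z : 'I_m -> V) : R :=
  \sum_(i < m) sqn (z i - avgv z).

Definition gradF (m : nat) (gf : 'I_m -> V -> V) (x : V) : V :=
  (m%:R)^-1 *: \sum_(i < m) gf i x.

End Defs.

(* Main.v *)
Require Import Defs.
From HB Require Import structures.
From mathcomp Require Import all_boot all_order all_algebra.
From mathcomp Require Import all_classical all_reals all_analysis.
Import Order.TTheory GRing.Theory Num.Theory.
Import numFieldNormedType.Exports.
Local Open Scope classical_set_scope.
Local Open Scope ring_scope.

From mathcomp Require Import ring lra.
Set Implicit Arguments. Unset Strict Implicit. Unset Printing Implicit Defensive.

Section S.
Context {R : realType} {d : nat}.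
Notation V := 'rV[R]_d.
Implicit Types a b c : V.

Lemma dotvC a b : dotv a b = dotv b a.
Proof. by rewrite /dotv; apply: eq_bigr => k _; rewrite mulrC. Qed.
Lemma dotvDl a b c : dotv (a + b) c = dotv a c + dotv b c.
Proof. by rewrite /dotv -big_split; apply: eq_bigr => k _; rewrite mxE mulrDl. Qed.
Lemma dotvZl (k : R) a b : dotv (k *: a) b = k * dotv a b.
Proof. by rewrite /dotv mulr_sumr; apply: eq_bigr => i _; rewrite mxE mulrA. Qed.
Lemma dotvNl a b : dotv (- a) b = - dotv a b.
Proof. by rewrite -scaleN1r dotvZl mulN1r. Qed.
Lemma dotvBl a b c : dotv (a - b) c = dotv a c - dotv b c.
Proof. by rewrite dotvDl dotvNl. Qed.
Lemma dotvDr a b c : dotv c (a + b) = dotv c a + dotv c b.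
Proof. by rewrite dotvC dotvDl !(dotvC c). Qed.
Lemma dotvZr (k : R) a b : dotv b (k *: a) = k * dotv b a.
Proof. by rewrite dotvC dotvZl dotvC. Qed.
Lemma dotvBr a b c : dotv c (a - b) = dotv c a - dotv c b.
Proof. by rewrite dotvC dotvBl !(dotvC c). Qed.
Lemma dotv0l b : dotv 0 b = 0.
Proof. by rewrite /dotv big1 // => k _; rewrite mxE mul0r. Qed.

Lemma coord_le a k : `|a ord0 k| <= `|a|.
Proof.
have -> : `|a| = mx_norm a by [].
rewrite mx_normrE.
rewrite (bigD1 (ord0, k)) //=; by rewrite le_max lexx.
Qed.

Lemma dotv_le a b : `|dotv a b| <= d%:R * (`|a| * `|b|).
Proof.
rewrite /dotv (le_trans (ler_norm_sum _ _ _)) //.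
have -> : d%:R * (`|a| * `|b|) = \sum_(k < d) (`|a| * `|b|) by rewrite sumr_const card_ord mulr_natl.
apply: ler_sum => k _.
by rewrite normrM ler_pM // coord_le.
Qed.

Lemma sqn_ge0 a : 0 <= sqn a.
Proof. by rewrite /sqn /dotv sumr_ge0 // => k _; rewrite -expr2 sqr_ge0. Qed.
Lemma line_derive (W : normedModType R) (g : V -> W) (p u : V) (s : R) :
  differentiable g (p + s *: u) ->
  is_derive s 1 (fun t : R => g (p + t *: u)) ('d g (p + s *: u) u).
Proof.
move=> dg.
have hl : is_diff s (fun t : R => p + t *: u) (fun t : R => t *: u).
  have := is_diffD (is_diff_cst p s) (is_diff_scalel s u).
  have e1 : cst p + ( *:%R ^~ u) = (fun t : R => p + t *: u)  by apply/funext=> t.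
  have e2 : (0 : R -> V) + ( *:%R ^~ u) = (fun t : R => t *: u).
     by apply/funext=> t /=; rewrite add0r.
  by rewrite e1 e2.
have hc := @is_diff_comp _ _ _ _ _ _ _ _ s hl (differentiableP dg).
split.
  apply: diff_derivable; exact: ex_diff.
rewrite (deriveE _ (@ex_diff _ _ _ _ _ _ _ hc)) diff_val /= scale1r //.
Qed.
Lemma diff_eps (W : normedModType R) (g : V -> W) (x0 : V) :
  differentiable g x0 -> forall e : R, 0 < e -> exists2 del : R, 0 < del &
  forall w : V, `|w| < del -> `|g (x0 + w) - g x0 - 'd g x0 w| <= e * `|w|.
Proof.
move=> dg e e0.
have /eqaddoP h := diff_locally dg.
have := h e e0.
move=> /nbhs_norm0P [del del0 Hd]; exists del => // w /Hd /=.
by rewrite [x0 + w]addrC /= opprD addrA.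
Qed.


Lemma open_ball_in (O : set V) x0 : open O -> O x0 ->
  exists2 r : R, 0 < r & forall z, `|z - x0| < r -> O z.
Proof.
move=> oO Ox0.
have : nbhs x0 O by apply: open_nbhs_nbhs; split.
move=> /nbhs_normP [r r0 Hr]; exists r => // z zr; apply: Hr => /=.
by rewrite distrC.
Qed.

Lemma second_diff (f : V -> R) (g : V -> V) (O : set V) (x0 u v : V) (e : R) :
  open O -> is_gradient_on O f g -> O x0 -> differentiable g x0 -> 0 < e ->
  exists2 T : R, 0 < T & forall t, 0 < t -> t < T ->
   [/\ O (x0 + t *: u), O (x0 + t *: v), O (x0 + t *: v + t *: u) &
   `|f (x0 + t *: v + t *: u) - f (x0 + t *: u) - f (x0 + t *: v) + f x0
      - t ^+ 2 * dotv ('d g x0 v) u| <= e * t ^+ 2].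
Proof.
move=> oO hg Ox0 dg e0.
have [r r0 Hr] := open_ball_in oO Ox0.
pose M := `|u| + `|v| + 1.
have M0 : 0 < M by rewrite /M ltr_wpDl // addr_ge0.
pose e' := e / (2 * (d%:R + 1) * M ^+ 2).
have e'0 : 0 < e' by rewrite /e' divr_gt0 // !mulr_gt0 // ?ltr_wpDl // exprn_gt0.
have [del del0 Hdel] := diff_eps dg e'0.
pose m := Num.min r del.
have m0 : 0 < m by rewrite /m lt_min r0 del0.
exists (m / M); first by rewrite divr_gt0.
move=> t t0 tT.
have tM : t * M < m by rewrite -ltr_pdivlMr.
have nw1 : forall s, 0 <= s <= t -> `|t *: v + s *: u| <= t * M - t.
  move=> s /andP[s0 st].
  rewrite (le_trans (ler_normD _ _)) // !normrZ (ger0_norm (ltW t0)) (ger0_norm s0).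
  rewrite /M mulrDr mulrDr mulr1 addrK addrC lerD2r ler_wpM2r //.
have nw2 : forall s, 0 <= s <= t -> `|s *: u| <= t * M - t.
  move=> s /andP[s0 st].
  rewrite normrZ (ger0_norm s0) /M mulrDr mulrDr mulr1 addrK.
  by rewrite (le_trans (ler_wpM2r _ st)) // ler_wpDr // mulr_ge0 // ltW.
have ltm : forall s, 0 <= s <= t -> `|t *: v + s *: u| < m /\ `|s *: u| < m.
  move=> s hs; split.
    by rewrite (le_lt_trans (nw1 s hs)) // (lt_trans _ tM) // ltrBlDr ltrDl.
  by rewrite (le_lt_trans (nw2 s hs)) // (lt_trans _ tM) // ltrBlDr ltrDl.
have O1 : forall s, 0 <= s <= t -> O (x0 + t *: v + s *: u).
  move=> s /ltm [h _]; apply: Hr; rewrite [_ - x0]addrC !addrA addNr add0r.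
  by rewrite (lt_le_trans h) // /m ge_min lexx.
have O2 : forall s, 0 <= s <= t -> O (x0 + s *: u).
  move=> s /ltm [_ h]; apply: Hr; rewrite [_ - x0]addrC addKr.
  by rewrite (lt_le_trans h) // /m ge_min lexx.
have t0t : 0 <= t <= t by apply/andP; split; [exact: ltW | exact: le_refl].
have tt0 : (0:R) <= 0 <= t by rewrite lexx ltW.
split.
- exact: O2.
- by have := O1 0 tt0; rewrite scale0r addr0.
- exact: O1.
pose F1 := fun s : R => f (x0 + t *: v + s *: u).
pose F2 := fun s : R => f (x0 + s *: u).
pose dF := fun s : R => dotv (g (x0 + t *: v + s *: u)) u - dotv (g (x0 + s *: u)) u.
have hder : forall s, 0 <= s <= t -> is_derive s 1 (F1 - F2) (dF s).
  move=> s hs.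
  have [df1 ef1] := hg _ (O1 s hs).
  have [df2 ef2] := hg _ (O2 s hs).
  have h1 := @line_derive R^o f (x0 + t *: v) u s df1.
  have h2 := @line_derive R^o f x0 u s df2.
  rewrite ef1 in h1; rewrite ef2 in h2.
  exact: is_deriveB.
have hcont : {within `[0, t], continuous (F1 - F2)}.
  apply: continuous_in_subspaceT => s hs.
  have hs' : 0 <= s <= t by move: hs; rewrite inE /= in_itv.
  apply: differentiable_continuous; apply/derivable1_diffP.
  exact: (@ex_derive _ _ _ _ _ _ _ (hder s hs')).
have [c hc Heq] : exists2 c, c \in `[0, t] & (F1 - F2) t - (F1 - F2) 0 = dF c * (t - 0).
  apply: MVT_segment => //; first exact: ltW.
  move=> s; rewrite in_itv /= => /andP[s0 st]; apply: hder.
  by rewrite !ltW.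
have hc' : 0 <= c <= t by move: hc; rewrite in_itv.
set H := 'd g x0.
pose w1 := t *: v + c *: u.
pose w2 := c *: u.
pose r1 := g (x0 + w1) - g x0 - H w1.
pose r2 := g (x0 + w2) - g x0 - H w2.
have [lw1 lw2] := ltm c hc'.
have mdel : m <= del by rewrite /m ge_min lexx orbT.
have B1 : `|r1| <= e' * `|w1| by apply: Hdel; exact: lt_le_trans lw1 mdel.
have B2 : `|r2| <= e' * `|w2| by apply: Hdel; exact: lt_le_trans lw2 mdel.
have G1 : g (x0 + t *: v + c *: u) = r1 + H w1 + g x0 by rewrite /r1 !subrK addrA.
have G2 : g (x0 + c *: u) = r2 + H w2 + g x0 by rewrite /r2 !subrK.
have Hl : H w1 = t *: H v + H w2 by rewrite /w1 linearD linearZ.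
have hdF : dF c = dotv r1 u - dotv r2 u + t * dotv (H v) u.
  rewrite /dF G1 G2 Hl !dotvDl dotvZl; ring.
rewrite subr0 in Heq.
have {}Heq : F1 t - F2 t - (F1 0 - F2 0) = dF c * t := Heq.
move: Heq; rewrite /F1 /F2 scale0r !addr0 hdF => Heq.
have -> : f (x0 + t *: v + t *: u) - f (x0 + t *: u) - f (x0 + t *: v) + f x0 -
    t ^+ 2 * dotv (H v) u = t * (dotv r1 u - dotv r2 u).
  apply/eqP; rewrite -subr_eq0; apply/eqP.
  rewrite (_ : _ - _ = (f (x0 + t *: v + t *: u) - f (x0 + t *: u) -
     (f (x0 + t *: v) - f x0)) - (dotv r1 u - dotv r2 u + t * dotv (H v) u) * t); last by ring.
  by rewrite Heq subrr.
rewrite normrM (gtr0_norm t0).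
have uM : `|u| <= M by rewrite /M -addrA lerDl addr_ge0.
have w1M : `|w1| <= t * M by rewrite (le_trans (nw1 c hc')) // lerBlDr lerDl ltW.
have w2M : `|w2| <= t * M by rewrite (le_trans (nw2 c hc')) // lerBlDr lerDl ltW.
have D1 : `|dotv r1 u| <= d%:R * (e' * (t * M) * M).
  apply: (le_trans (dotv_le _ _)); apply: ler_wpM2l => //; apply: ler_pM => //.
  by apply: (le_trans B1); apply: ler_wpM2l => //; exact: ltW.
have D2 : `|dotv r2 u| <= d%:R * (e' * (t * M) * M).
  apply: (le_trans (dotv_le _ _)); apply: ler_wpM2l => //; apply: ler_pM => //.
  by apply: (le_trans B2); apply: ler_wpM2l => //; exact: ltW.
have D12 : `|dotv r1 u - dotv r2 u| <= 2 * d%:R * e' * M ^+ 2 * t.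
  apply: (le_trans (ler_normB _ _)).
  have -> : 2 * d%:R * e' * M ^+ 2 * t = d%:R * (e' * (t * M) * M) + d%:R * (e' * (t * M) * M) by ring.
  exact: lerD.
have Ee : e = e' * (2 * (d%:R + 1) * M ^+ 2).
  by rewrite /e' divfK // !mulf_neq0 // ?gt_eqF // ?exprn_gt0 // ltr_wpDl.
apply: (le_trans (ler_wpM2l (ltW t0) D12)).
rewrite Ee.
have -> : t * (2 * d%:R * e' * M ^+ 2 * t) = (2 * d%:R * e' * M ^+ 2) * t ^+ 2 by ring.
have -> : e' * (2 * (d%:R + 1) * M ^+ 2) * t ^+ 2 = (2 * (d%:R + 1) * e' * M ^+ 2) * t ^+ 2 by ring.
apply: ler_wpM2r; first exact: sqr_ge0.
apply: ler_wpM2r; first exact: sqr_ge0.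
apply: ler_wpM2r; first exact: ltW.
by apply: ler_wpM2l => //; rewrite lerDl.
Qed.

Lemma eps_eq0 (x : R) : (forall e : R, 0 < e -> `|x| <= e) -> x = 0.
Proof.
move=> h; case: (eqVneq x 0) => // hx; exfalso.
have hp : 0 < `|x| by rewrite normr_gt0.
have := h (`|x| / 2) (divr_gt0 hp (ltr0Sn _ 1)).
lra.
Qed.

Lemma eps_ge0 (x : R) : (forall e : R, 0 < e -> - e <= x) -> 0 <= x.
Proof.
move=> h; rewrite leNgt; apply/negP => hx.
have := h (- x / 2); rewrite divr_gt0 ?oppr_gt0 // => /(_ isT); lra.
Qed.

Lemma hess_sym (f : V -> R) (g : V -> V) (O : set V) (x0 u v : V) :
  open O -> is_gradient_on O f g -> O x0 -> differentiable g x0 ->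
  dotv ('d g x0 v) u = dotv ('d g x0 u) v.
Proof.
move=> oO hg Ox0 dg; apply/eqP; rewrite -subr_eq0; apply/eqP.
apply: eps_eq0 => e e0.
have e20 : 0 < e / 2 by rewrite divr_gt0.
have [T1 T10 H1] := second_diff u v oO hg Ox0 dg e20.
have [T2 T20 H2] := second_diff v u oO hg Ox0 dg e20.
pose t := Num.min T1 T2 / 2.
have t0 : 0 < t by rewrite /t divr_gt0 // lt_min T10 T20.
have tm : t < Num.min T1 T2 by rewrite /t ltr_pdivrMr // ltr_pMr // ?lt_min ?T10 ?T20 // ltr1n.
have m1 : Num.min T1 T2 <= T1 by rewrite ge_min lexx.
have m2 : Num.min T1 T2 <= T2 by rewrite ge_min lexx orbT.
have [_ _ _ B1] := H1 t t0 (lt_le_trans tm m1).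
have [_ _ _ B2] := H2 t t0 (lt_le_trans tm m2).
rewrite (addrAC x0 (t *: u)) in B2.
set D := f (x0 + t *: v + t *: u) in B1 B2.
have t2 : 0 < t ^+ 2 by rewrite exprn_gt0.
have : `|t ^+ 2 * (dotv ('d g x0 v) u - dotv ('d g x0 u) v)| <= e * t ^+ 2.
  have -> : t ^+ 2 * (dotv ('d g x0 v) u - dotv ('d g x0 u) v) =
     (D - f (x0 + t *: v) - f (x0 + t *: u) + f x0 - t ^+ 2 * dotv ('d g x0 u) v) -
     (D - f (x0 + t *: u) - f (x0 + t *: v) + f x0 - t ^+ 2 * dotv ('d g x0 v) u) by ring.
  apply: (le_trans (ler_normB _ _)).
  have -> : e * t ^+ 2 = e / 2 * t ^+ 2 + e / 2 * t ^+ 2 by field.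
  exact: lerD.
by rewrite normrM (gtr0_norm t2) mulrC ler_pM2r.
Qed.

Lemma hess_psd (f : V -> R) (g : V -> V) (O : set V) (x0 v : V) :
  open O -> is_gradient_on O f g -> convex_fun_on O f -> O x0 ->
  differentiable g x0 -> 0 <= dotv ('d g x0 v) v.
Proof.
move=> oO hg cf Ox0 dg; apply: eps_ge0 => e e0.
have [T T0 H1] := second_diff v v oO hg Ox0 dg e0.
pose t := T / 2.
have t0 : 0 < t by rewrite /t divr_gt0.
have tT : t < T by rewrite /t ltr_pdivrMr // ltr_pMr // ltr1n.
have [_ O1 O2 B] := H1 t t0 tT.
have mid : (1 - 2^-1) *: x0 + 2^-1 *: (x0 + t *: v + t *: v) = x0 + t *: v.
  by apply/rowP => k; rewrite !mxE; field.
have hc : 0 <= (2^-1 : R) <= 1 by apply/andP; split; rewrite ?invr_ge0 ?invf_le1 ?ler0n ?ler1n.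
have := cf _ _ _ Ox0 O2 hc; rewrite mid => /(_ O1) hconv.
have t2 : 0 < t ^+ 2 by rewrite exprn_gt0.
move: B; rewrite ler_norml => /andP[_ B].
have : - e * t ^+ 2 <= t ^+ 2 * dotv ('d g x0 v) v.
  have h2 : (1 - 2^-1 : R) = 2^-1 by field.
  rewrite h2 in hconv.
  rewrite mulNr; move: B hconv.
  set E := e * t ^+ 2; set A := t ^+ 2 * _.
  set a := f _; set b := f _; set c := f _; move=> B hconv.
  have : 2 * b <= a + c.
    have -> : a + c = 2 * (2^-1 * a + 2^-1 * c) by field.
    by rewrite ler_pM2l // addrC.
  lra.
by rewrite mulrC ler_pM2l.
Qed.


Lemma dot_derive (G : R -> V) (D w : V) (s : R) :
  is_derive s 1 G D -> is_derive s 1 (fun t => dotv (G t) w) (dotv D w).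
Proof.
move=> hG.
have hd : derivable G s 1 := @ex_derive _ _ _ _ _ _ _ hG.
have hk : forall k, is_derive s 1 (fun t => G t ord0 k) (D ord0 k).
  move=> k; split; first by have := proj1 (@derivable_mxP R R^o 1 d G s 1) hd; apply.
  by have := derive_mx hd; rewrite (@derive_val _ _ _ _ _ _ _ hG) => ->; rewrite mxE.
have hs : is_derive s 1 (\sum_(k < d) (w ord0 k \*: (fun t => G t ord0 k)))
             (\sum_(k < d) (w ord0 k *: D ord0 k)).
  by apply: is_derive_sum => k; apply: is_deriveZ.
have E1 : (\sum_(k < d) (w ord0 k \*: (fun t => G t ord0 k))) = (fun t => dotv (G t) w).
  rewrite fct_sumE; apply/funext => t /=; rewrite /dotv; apply: eq_bigr => k _.
  by rewrite /= mulrC.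
have E2 : \sum_(k < d) (w ord0 k *: D ord0 k) = dotv D w.
  by rewrite /dotv; apply: eq_bigr => k _; rewrite mulrC.
by rewrite -E1 -E2.
Qed.



Lemma quad_cs (a b c : R) : 0 <= c -> (forall l : R, 0 <= a + 2 * l * b + l ^+ 2 * c) ->
  b ^+ 2 <= a * c.
Proof.
move=> c0 h.
have a0 : 0 <= a by have := h 0; rewrite !(mul0r, mulr0, expr0n) /= !addr0.
case: (eqVneq c 0) => [c_0|cn0].
  case: (eqVneq b 0) => [->|bn0]; first by rewrite expr0n /= mulr_ge0.
  have := h (- (a + 1) / (2 * b)).
  have -> : 2 * (- (a + 1) / (2 * b)) * b = - (a + 1) by field.
  by rewrite c_0 mulr0 addr0; lra.
have cp : 0 < c by rewrite lt_neqAle eq_sym cn0.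
have := h (- b / c).
have -> : a + 2 * (- b / c) * b + (- b / c) ^+ 2 * c = a - b ^+ 2 / c by field.
rewrite subr_ge0 ler_pdivrMr //.
Qed.

Lemma cs_form (H : {linear V -> V}) (u w : V) :
  (forall x, 0 <= dotv (H x) x) -> dotv (H u) w = dotv (H w) u ->
  (dotv (H u) w) ^+ 2 <= dotv (H u) u * dotv (H w) w.
Proof.
move=> psd sym; apply: quad_cs; first exact: psd.
move=> l; have := psd (u + l *: w).
rewrite linearD linearZ !dotvDl !dotvDr !dotvZl !dotvZr -sym => h0.
have -> : dotv (H u) u + 2 * l * dotv (H u) w + l ^+ 2 * dotv (H w) w =
  dotv (H u) u + l * dotv (H u) w + (l * dotv (H u) w + l * (l * dotv (H w) w)) by ring.
exact: h0.
Qed.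

Lemma grad_lip (f : V -> R) (g : V -> V) (O K : set V) (Lc : R) (a b : V) :
  open O -> K `<=` O -> convex_in K -> is_gradient_on O f g -> convex_fun_on O f ->
  (forall x0, O x0 -> differentiable g x0) ->
  (forall x0 w, K x0 -> dotv ('d g x0 w) w <= Lc * sqn w) ->
  K a -> K b -> sqn (g a - g b) <= Lc ^+ 2 * sqn (a - b).
Proof.
move=> oO KO cK hg cf dg hL Ka Kb.
set u := a - b; set w := g a - g b.
have Kz : forall s : R, 0 <= s <= 1 -> K (b + s *: u).
  move=> s hs; have := cK b a s Kb Ka hs.
  have -> : (1 - s) *: b + s *: a = b + s *: u by apply/rowP => k; rewrite !mxE; ring.
  done.
pose phi := fun s : R => dotv (g (b + s *: u)) w.
have hder : forall s : R, 0 <= s <= 1 -> is_derive s 1 phi (dotv ('d g (b + s *: u) u) w).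
  move=> s hs; apply: dot_derive; apply: line_derive; apply: dg; apply: KO; exact: Kz.
have hcont : {within `[0, 1], continuous phi}.
  apply: continuous_in_subspaceT => s hs.
  have hs' : 0 <= s <= 1 by move: hs; rewrite inE /= in_itv.
  apply: differentiable_continuous; apply/derivable1_diffP.
  exact: (@ex_derive _ _ _ _ _ _ _ (hder s hs')).
have [c hc Heq] : exists2 c, c \in `[0, 1] &
    phi 1 - phi 0 = dotv ('d g (b + c *: u) u) w * (1 - 0).
  apply: MVT_segment => //.
  move=> s; rewrite in_itv /= => /andP[s0 st]; apply: hder.
  by rewrite !ltW.
have hc' : 0 <= c <= 1 by move: hc; rewrite in_itv.
have ba : b + u = a by rewrite /u addrC subrK.
move: Heq; rewrite /phi scale1r scale0r addr0 subr0 mulr1 ba -dotvBl -/w => Heq.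
have Kzc := Kz c hc'.
set z := b + c *: u in Heq Kzc.
have Oz : O z by apply: KO.
have psd : forall x, 0 <= dotv ('d g z x) x.
  by move=> x; apply: (hess_psd x oO hg cf Oz (dg z Oz)).
have sym : dotv ('d g z u) w = dotv ('d g z w) u.
  have := hess_sym w u oO hg Oz (dg z Oz). done.
have cs := cs_form psd sym.
rewrite -Heq in cs.
have b1 := hL z u Kzc.
have b2 := hL z w Kzc.
have cs2 : sqn w ^+ 2 <= (Lc * sqn u) * (Lc * sqn w).
  by apply: (le_trans cs); apply: ler_pM => //; exact: psd.
case: (eqVneq (sqn w) 0) => [->|wn0].
  by rewrite mulr_ge0 ?sqr_ge0 ?sqn_ge0.
have wp : 0 < sqn w by rewrite lt_neqAle eq_sym wn0 sqn_ge0.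
rewrite -(ler_pM2r wp); apply: (le_trans _ (le_trans cs2 _)).
  by rewrite expr2.
by rewrite expr2 le_eqVlt; apply/orP; left; apply/eqP; ring.
Qed.


Lemma sqnE (v : V) : sqn v = \sum_(k < d) v ord0 k ^+ 2.
Proof. by rewrite /sqn /dotv; apply: eq_bigr => k _; rewrite expr2. Qed.

Lemma sqnN (v : V) : sqn (- v) = sqn v.
Proof. by rewrite !sqnE; apply: eq_bigr => k _; rewrite mxE sqrrN. Qed.

Lemma sqnD_le (a b : V) : sqn (a + b) <= 2 * sqn a + 2 * sqn b.
Proof.
rewrite !sqnE !mulr_sumr -big_split /=; apply: ler_sum => k _; rewrite mxE.
have := sqr_ge0 (a ord0 k - b ord0 k); rewrite !expr2; nra.
Qed.

Lemma sum_sqr_pairs (m : nat) (p : 'I_m -> R) :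
  \sum_(i < m) \sum_(j < m) (p i - p j) ^+ 2 =
  2 * m%:R * \sum_(i < m) p i ^+ 2 - 2 * (\sum_(i < m) p i) ^+ 2.
Proof.
have E : forall i j : 'I_m, (p i - p j) ^+ 2 = p i ^+ 2 + p j ^+ 2 - 2 * (p i * p j).
  by move=> i j; ring.
under eq_bigr do under eq_bigr do rewrite E.
set S := \sum_(i < m) p i; set S2 := \sum_(i < m) p i ^+ 2.
have inner : forall i, \sum_(j < m) (p i ^+ 2 + p j ^+ 2 - 2 * (p i * p j)) =
   m%:R * p i ^+ 2 + S2 - 2 * p i * S.
  move=> i; rewrite sumrB big_split /= sumr_const card_ord -!mulr_sumr mulr_natl.
  rewrite -/S -/S2 -[p i ^+ 2 *+ m]mulr_natl -[_ *+ 2]mulr_natl; ring.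
under eq_bigr do rewrite inner.
rewrite sumrB big_split /= sumr_const card_ord -!mulr_sumr -!mulr_suml.
rewrite -/S -/S2 -mulr_sumr -/S -[S2 *+ m]mulr_natl; ring.
Qed.


Lemma sum_sqr_center (m : nat) (p : 'I_m -> R) : (0 < m)%N ->
  \sum_(i < m) (p i - m%:R^-1 * \sum_(j < m) p j) ^+ 2 =
  \sum_(i < m) p i ^+ 2 - m%:R^-1 * (\sum_(i < m) p i) ^+ 2.
Proof.
move=> m0; set S := \sum_(j < m) p j.
have mn0 : m%:R != 0 :> R by rewrite pnatr_eq0 -lt0n.
have E : forall i, (p i - m%:R^-1 * S) ^+ 2 = p i ^+ 2 - 2 * m%:R^-1 * S * p i + m%:R^-2 * S ^+ 2.
  by move=> i; rewrite expr2; field.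
under eq_bigr do rewrite E.
rewrite big_split sumrB /= sumr_const card_ord -mulr_sumr -/S.
rewrite -mulr_natl; field; exact: mn0.
Qed.

Lemma cs_sum (m : nat) (p : 'I_m -> R) :
  (\sum_(i < m) p i) ^+ 2 <= m%:R * \sum_(i < m) p i ^+ 2.
Proof.
have h : 0 <= \sum_(i < m) \sum_(j < m) (p i - p j) ^+ 2.
  by apply: sumr_ge0 => i _; apply: sumr_ge0 => j _; exact: sqr_ge0.
rewrite sum_sqr_pairs in h; lra.
Qed.

Lemma row_sum_coord (m : nat) (v : 'I_m -> V) (c : R) k :
  (c *: \sum_(j < m) v j) ord0 k = c * \sum_(j < m) v j ord0 k.
Proof. by rewrite mxE summxE. Qed.

Lemma jensen_sqn (m : nat) (v : 'I_m -> V) : (0 < m)%N ->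
  sqn (m%:R^-1 *: \sum_(j < m) v j) <= m%:R^-1 * \sum_(j < m) sqn (v j).
Proof.
move=> m0.
have mp : 0 < m%:R :> R by rewrite ltr0n.
rewrite sqnE; under eq_bigr do rewrite row_sum_coord.
under [X in _ <= _ * X]eq_bigr do rewrite sqnE.
rewrite exchange_big mulr_sumr; apply: ler_sum => k _ /=.
rewrite exprMn expr2 -mulrA ler_pM2l ?invr_gt0 //.
rewrite mulrC ler_pdivrMr // mulrC; exact: cs_sum.
Qed.

Lemma pair_ident (m : nat) (X : 'I_m -> V) : (0 < m)%N ->
  \sum_(i < m) \sum_(j < m) sqn (X i - X j) = 2 * m%:R * sqn_perp X.
Proof.
move=> m0.
have mn0 : m%:R != 0 :> R by rewrite pnatr_eq0 -lt0n.
rewrite /sqn_perp.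
under eq_bigr do under eq_bigr do rewrite sqnE.
under [X in _ = _ * X]eq_bigr do rewrite sqnE.
under eq_bigr do rewrite exchange_big /=.
rewrite exchange_big /= [in RHS]exchange_big mulr_sumr; apply: eq_bigr => k _.
have E1 : forall i j, (X i - X j) ord0 k = X i ord0 k - X j ord0 k by move=> i j; rewrite !mxE.
have E2 : forall i, (X i - avgv X) ord0 k = X i ord0 k - m%:R^-1 * \sum_(j < m) X j ord0 k.
  by move=> i; rewrite /avgv !mxE summxE.
under eq_bigr do under eq_bigr do rewrite E1.
under [X in _ = _ * X]eq_bigr do rewrite E2.
rewrite sum_sqr_pairs sum_sqr_center //; field; exact: mn0.
Qed.


Lemma conv_comb (K : set V) : convex_in K -> forall n (w : 'I_n -> R) (z : 'I_n -> V),
  (forall j, 0 <= w j) -> \sum_(j < n) w j = 1 -> (forall j, K (z j)) ->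
  K (\sum_(j < n) w j *: z j).
Proof.
move=> cK; elim=> [|n IH] w z w0 w1 Kz.
  by move: w1; rewrite big_ord0 => /eqP; rewrite eq_sym oner_eq0.
rewrite big_ord_recr /=; rewrite big_ord_recr /= in w1.
set s := \sum_(i < n) w (widen_ord (leqnSn n) i) in w1 *.
have s0 : 0 <= s by apply: sumr_ge0 => i _.
have wl0 := w0 ord_max.
case: (eqVneq (w ord_max) 1) => hl.
  have ss : s = 0 by move: w1; rewrite hl; lra.
  have z0 := (psumr_eq0P (fun i _ => w0 (widen_ord (leqnSn n) i)) ss).
  rewrite big1 ?add0r ?hl ?scale1r // => i _.
  by rewrite z0 // scale0r.
have sp : 0 < s.
  rewrite lt_neqAle s0 andbT; apply/eqP => s_0; move: hl; rewrite -w1 -s_0 add0r eqxx //.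
pose w' := fun i : 'I_n => w (widen_ord (leqnSn n) i) / s.
have KP : K (\sum_(i < n) w' i *: z (widen_ord (leqnSn n) i)).
  apply: IH => //.
    by move=> j; rewrite /w' divr_ge0.
  by rewrite /w' -mulr_suml -/s divff // gt_eqF.
have -> : \sum_(i < n) w (widen_ord (leqnSn n) i) *: z (widen_ord (leqnSn n) i) =
    (1 - w ord_max) *: \sum_(i < n) w' i *: z (widen_ord (leqnSn n) i).
  rewrite scaler_sumr; apply: eq_bigr => i _; rewrite scalerA /w'.
  have -> : 1 - w ord_max = s by lra.
  by rewrite mulrC divfK // gt_eqF.
apply: cK => //.
by rewrite wl0 /=; lra.
Qed.
End S.

Unset Implicit Arguments. Set Strict Implicit.

Theorem lemma3p3
  (R : realType) (d m : nat)
  (* problem data *)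
  (K O : set 'rV[R]_d)
  (f : 'I_m -> 'rV[R]_d -> R) (gf : 'I_m -> 'rV[R]_d -> 'rV[R]_d)
  (G : 'rV[R]_d -> R) (mu L : R) (Li : 'I_m -> R) (Lmax : R)
  (* network *)
  (E : rel 'I_m) (W : 'M[R]_m)
  (* surrogates f~_i(. ; .) and their gradients in the first argument *)
  (ft : 'I_m -> 'rV[R]_d -> 'rV[R]_d -> R)
  (gft : 'I_m -> 'rV[R]_d -> 'rV[R]_d -> 'rV[R]_d)
  (* algorithm *)
  (alpha : R) (x xh y : nat -> 'I_m -> 'rV[R]_d) :
  (* Assumption (A) *)
  (0 < m)%N ->
  K !=set0 -> closed K -> convex_in K ->
  open O -> K `<=` O ->
  (forall i, is_gradient_on O (f i) (gf i)) ->
  (forall i x0, O x0 -> differentiable (gf i) x0) ->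
  (forall i, convex_fun_on O (f i)) ->
  0 < mu ->
  (forall x0 v, K x0 ->
     mu * sqn v <= dotv ('d (gradF gf) x0 v) v <= L * sqn v) ->
  convex_fun_on K G ->
  (forall i x0 v, K x0 -> dotv ('d (gf i) x0 v) v <= Li i * sqn v) ->
  (forall i, Li i <= Lmax) -> (exists i, Lmax = Li i) ->
  (* Assumption (B) *)
  (forall i j, E i j = E j i) -> (forall i, ~~ E i i) ->
  (forall i j, connect E i j) ->
  (* Assumption (W) *)
  (forall i, 0 < W i i) ->
  (forall i j, i != j -> (0 < W i j <-> E i j)) ->
  (forall i j, i != j -> ~~ E i j -> W i j = 0) ->
  (forall i j, 0 <= W i j) ->
  (forall i, \sum_(j < m) W i j = 1) ->
  (forall j, \sum_(i < m) W i j = 1) ->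
  (* Assumption (C) *)
  (forall i, C2_on [set p : 'rV[R]_d * 'rV[R]_d | O p.1 /\ O p.2]
                   (fun p => ft i p.1 p.2)) ->
  (forall i z, O z -> is_gradient_on O (fun u => ft i u z) (fun u => gft i u z)) ->
  (forall i x0, O x0 -> gft i x0 x0 = gf i x0) ->
  (forall i z, K z -> euclid_lipschitz_on K (fun u => gft i u z)) ->
  (forall i z, K z -> strongly_convex_on K (fun u => ft i u z)) ->
  (* SONATA *)
  0 < alpha <= 1 ->
  (forall i, K (x 0%N i)) ->
  (forall i, y 0%N i = gf i (x 0%N i)) ->
  (forall n i, K (xh n i) /\
     forall z, K z ->
       ft i (xh n i) (x n i) + dotv (y n i - gf i (x n i)) (xh n i - x n i) + G (xh n i)
       <= ft i z (x n i) + dotv (y n i - gf i (x n i)) (z - x n i) + G z) ->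
  (forall n i, x n.+1 i =
     \sum_(j < m) W i j *: (x n j + alpha *: (xh n j - x n j))) ->
  (forall n i, y n.+1 i =
     \sum_(j < m) W i j *: (y n j + gf j (x n.+1 j) - gf j (x n j))) ->
  (* conclusion *)
  forall n : nat,
    \sum_(i < m) sqn (gradF gf (x n i) - y n i)
      <= 4 * Lmax ^+ 2 * sqn_perp (x n) + 2 * sqn_perp (y n).
Proof.
move=> m0 Kne Kcl cK oO KO hgf dgf cvf mu0 hmuL cG hLi LiLmax [i0 Lmax_eq] Esym Eirr Econn
  Wdiag WE W0 Wge0 Wrow Wcol hC2 hft hgft hlip hsc halpha Kx0 y0 hxh hx hy n.
have [al0 al1] : 0 <= alpha /\ alpha <= 1 by move: halpha => /andP[/ltW -> ->].
have xK : forall n i, K (x n i).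
  elim=> [|k IH] i; first exact: Kx0.
  rewrite hx; apply: (conv_comb cK) => // j.
  have -> : x k j + alpha *: (xh k j - x k j) = (1 - alpha) *: x k j + alpha *: xh k j.
    by apply/rowP => l; rewrite !mxE; ring.
  apply: cK; [exact: IH | exact: (hxh k j).1 | by rewrite al0 al1].
have ysum : forall n, \sum_(i < m) y n i = \sum_(i < m) gf i (x n i).
  elim=> [|k IH]; first by apply: eq_bigr => i _; rewrite y0.
  under eq_bigr do rewrite hy.
  rewrite exchange_big /=.
  under eq_bigr do rewrite -scaler_suml Wcol scale1r.
  by rewrite sumrB big_split /= IH addrAC subrr add0r.
have lipj : forall j a b, K a -> K b -> sqn (gf j a - gf j b) <= Lmax ^+ 2 * sqn (a - b).
  move=> j a b Ka Kb.
  have Oa : O a by apply: KO.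
  case: (eqVneq (sqn (gf j a - gf j b)) 0) => [->|wn0].
    by rewrite mulr_ge0 ?sqr_ge0 ?sqn_ge0.
  have wp : 0 < sqn (gf j a - gf j b) by rewrite lt_neqAle eq_sym wn0 sqn_ge0.
  have Lj0 : 0 <= Li j.
    have h1 := hess_psd (gf j a - gf j b) oO (hgf j) (cvf j) Oa (dgf j a Oa).
    have h2 := hLi j a (gf j a - gf j b) Ka.
    by rewrite -(pmulr_lge0 _ wp) (le_trans h1 h2).
  apply: (le_trans (grad_lip oO KO cK (hgf j) (cvf j) (dgf j) (hLi j) Ka Kb)).
  apply: ler_wpM2r; first exact: sqn_ge0.
  by rewrite !expr2 ler_pM // LiLmax.
set X := x n; set Y := y n.
have mp : 0 < m%:R :> R by rewrite ltr0n.
have avgY : avgv Y = m%:R^-1 *: \sum_(j < m) gf j (X j) by rewrite /avgv /Y ysum.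
pose a := fun i : 'I_m => m%:R^-1 *: \sum_(j < m) (gf j (X i) - gf j (X j)).
have dec : forall i, gradF gf (X i) - Y i = a i + (avgv Y - Y i).
  by move=> i; rewrite avgY /a /gradF sumrB scalerBr addrA subrK.
have step1 : \sum_(i < m) sqn (gradF gf (X i) - Y i) <=
    \sum_(i < m) (2 * sqn (a i) + 2 * sqn (avgv Y - Y i)).
  by apply: ler_sum => i _; rewrite dec; exact: sqnD_le.
have pY : \sum_(i < m) sqn (avgv Y - Y i) = sqn_perp Y.
  by apply: eq_bigr => i _; rewrite -opprB sqnN.
have pa : \sum_(i < m) sqn (a i) <= 2 * Lmax ^+ 2 * sqn_perp X.
  apply: (@le_trans _ _ (\sum_(i < m) (m%:R^-1 * \sum_(j < m) (Lmax ^+ 2 * sqn (X i - X j))))).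
    apply: ler_sum => i _; apply: (le_trans (jensen_sqn _ m0)).
    rewrite ler_pM2l ?invr_gt0 //; apply: ler_sum => j _.
    by apply: lipj; apply: xK.
  rewrite -mulr_sumr; under eq_bigr do rewrite -mulr_sumr.
  rewrite -mulr_sumr pair_ident //.
  rewrite le_eqVlt; apply/orP; left; apply/eqP; field.
  by rewrite gt_eqF.
apply: (le_trans step1); rewrite big_split /= -!mulr_sumr pY.
lra.
Qed.
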